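(* Let $D$ be a division algebra and $S$ a ring extension of $D$. Assume that elements $f_1,\ldots,f_d\in S$ are automorphic over $D$ and left linearly independent over $D$. Then $f=f_1+\cdots+f_d$ is automorphic over $D$ if and only if there is a single automorphism $\pi\in\mathrm{Aut}(D)$ such that $f,f_1,\ldots,f_d$ are all automorphic over $D$ with respect to $\pi$.
   Context: An element $a$ of a ring $S\supseteq D$ is automorphic over $D$ with respect to $\pi\in\mathrm{Aut}(D)$ if $ab=\pi(b)a$ for all $b\in D$; it is automorphic over $D$ if it is automorphic with respect to some automorphism of $D$. *)

(* Defs.v *)
From HB Require Import structures.
From mathcomp Require Import all_boot all_order all_algebra.
Set Implicit Arguments. Unset Strict Implicit. Unset Printing Implicit Defensive.
Import GRing.Theory.
Local Open Scope ring_scope.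

Definition is_division_ring (D : unitRingType) : Prop :=
  forall x : D, x != 0 -> x \is a GRing.unit.

Definition is_ring_aut (D : unitRingType) (pi : {rmorphism D -> D}) : Prop :=
  bijective pi.

Definition automorphic_wrt (D : unitRingType) (S : nzRingType)
  (iota : {rmorphism D -> S}) (pi : {rmorphism D -> D}) (a : S) : Prop :=
  forall b : D, a * iota b = iota (pi b) * a.

Definition automorphic (D : unitRingType) (S : nzRingType)
  (iota : {rmorphism D -> S}) (a : S) : Prop :=
  exists pi : {rmorphism D -> D}, is_ring_aut pi /\ automorphic_wrt iota pi a.

Definition left_lin_indep (D : unitRingType) (S : nzRingType)
  (iota : {rmorphism D -> S}) (d : nat) (f : 'I_d -> S) : Prop :=
  forall c : 'I_d -> D, \sum_(i < d) iota (c i) * f i = 0 -> forall i, c i = 0.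

(* Main.v *)
Require Import Defs.
From HB Require Import structures.
From mathcomp Require Import all_boot all_order all_algebra.
From Stdlib Require Import IndefiniteDescription.
Import GRing.Theory.
Local Open Scope ring_scope.

Theorem lemma5p5 (D : unitRingType) (S : nzRingType)
  (iota : {rmorphism D -> S}) (d : nat) (f : 'I_d -> S) :
  is_division_ring D ->
  injective iota ->
  (forall i, automorphic iota (f i)) ->
  left_lin_indep iota f ->
  (automorphic iota (\sum_(i < d) f i) <->
   exists pi : {rmorphism D -> D},
     is_ring_aut pi /\
     automorphic_wrt iota pi (\sum_(i < d) f i) /\
     (forall i, automorphic_wrt iota pi (f i))).
Proof.
move=> _ _ haut hind; split; last first.
  by case=> pi [hp [hs _]]; exists pi.
case=> sg [hsg hs]; exists sg; split=> //; split=> // i b.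
pose P i := fun pi : {rmorphism D -> D} => automorphic_wrt iota pi (f i).
have pif : forall j : 'I_d, sig (P j).
  move=> j; apply: constructive_indefinite_description.
  by case: (haut j) => pi [_ h]; exists pi.
pose c j := sg b - sval (pif j) b.
have /hind H : \sum_(j < d) iota (c j) * f j = 0.
  have e1 := hs b; rewrite mulr_suml mulr_sumr in e1.
  rewrite (eq_bigr (fun j => iota (sg b) * f j - f j * iota b)); last first.
    by move=> j _; rewrite /c rmorphB mulrBl (svalP (pif j) b).
  by rewrite sumrB e1 subrr.
have := H i; rewrite /c => /eqP; rewrite subr_eq0 => /eqP ->.
exact: (svalP (pif i) b).
Qed.
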